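(* Let $G$ be a finite simple undirected graph on $n\geq 3$ vertices satisfying: (a) $\delta(G)\geq \frac{n-1}{2}$; (b) $G$ has no perfect matching; (c) $G$ is triangle-free (contains no cycle of length $3$). Then $G$ is isomorphic either to the cycle $C_5$ or to the complete bipartite graph $K_{\frac{n-1}{2},\frac{n+1}{2}}$.
   Context: $\delta(G)$ denotes the minimum vertex degree of $G$. $C_5$ is the cycle on $5$ vertices. $K_{m,p}$ denotes the complete bipartite graph with parts of sizes $m$ and $p$. A triangle is a cycle of length $3$. *)

(* Defs.v *)
From mathcomp Require Import all_boot.
Set Implicit Arguments. Unset Strict Implicit. Unset Printing Implicit Defensive.

Definition simple_graph (T : finType) (e : rel T) : Prop :=
  irreflexive e /\ symmetric e.

Definition deg (T : finType) (e : rel T) (x : T) : nat := #|[set y | e x y]|.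

Definition triangle_free (T : finType) (e : rel T) : Prop :=
  forall x y z : T, ~ (e x y /\ e y z /\ e z x).

Definition perfect_matching (T : finType) (e : rel T) (M : {set {set T}}) : Prop :=
  (forall A, A \in M -> exists x y, e x y /\ A = [set x; y]) /\
  (forall v : T, #|[set A in M | v \in A]| = 1).

Definition has_perfect_matching (T : finType) (e : rel T) : Prop :=
  exists M, perfect_matching e M.

Definition graph_iso (T V : finType) (e : rel T) (e' : rel V) : Prop :=
  exists f : T -> V, bijective f /\ forall x y, e x y = e' (f x) (f y).

Definition C5_rel : rel 'I_5 :=
  fun i j => (j == (i.+1 %% 5) :> nat) || (i == (j.+1 %% 5) :> nat).

Definition Kbip_rel (m p : nat) : rel ('I_m + 'I_p) :=
  fun u v => match u, v with
             | inl _, inr _ | inr _, inl _ => true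
             | _, _ => false
             end.

(* Main.v *)
Require Import Defs.
From mathcomp Require Import all_boot.
From Stdlib Require Import Lia.

Ltac slia := repeat match goal with | n := _ |- _ => clearbody n end; repeat match goal with
  | H : is_true (_ <= _) |- _ => move/leP: H => H
  | H : is_true (_ < _) |- _ => move/ltP: H => H
  | H : context [addn] |- _ => rewrite -!plusE in H
  | H : context [muln] |- _ => rewrite -!multE in H
  | H : context [subn] |- _ => rewrite -!minusE in H
  end; try (first [apply/ltP | apply/leP]); rewrite -?plusE -?multE -?minusE; lia.

Lemma C5_inj (i j : 'I_5) : (forall k, C5_rel i k = C5_rel j k) -> i = j.
Proof.
move=> H; apply: val_inj.
case: i j H => [[|[|[|[|[|i]]]]] Hi] [[|[|[|[|[|j]]]]] Hj] //= H;
first [ move: (H (@Ordinal 5 0 isT)); vm_compute; by []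
      | move: (H (@Ordinal 5 1 isT)); vm_compute; by []
      | move: (H (@Ordinal 5 2 isT)); vm_compute; by []
      | move: (H (@Ordinal 5 3 isT)); vm_compute; by []
      | move: (H (@Ordinal 5 4 isT)); vm_compute; by [] ].
Qed.

Lemma iso_inv (T V : finType) (e : rel T) (e' : rel V) (g : V -> T) :
  injective g -> #|T| <= #|V| -> (forall u v, e (g u) (g v) = e' u v) ->
  graph_iso e e'.
Proof.
move=> ig hc he.
have [f gf fg] := inj_card_bij ig hc.
exists f; split; first by exists g.
by move=> a b; rewrite -he !fg.
Qed.

Lemma nth_enum_in (T : finType) (A : {set T}) v (i : nat) :
  i < #|A| -> nth v (enum A) i \in A.
Proof. by move=> hi; rewrite -mem_enum mem_nth // -cardE. Qed.

Lemma nth_enum_inj (T : finType) (A : {set T}) v (i j : nat) :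
  i < #|A| -> j < #|A| -> nth v (enum A) i = nth v (enum A) j -> i = j.
Proof.
move=> hi hj /eqP; rewrite nth_uniq ?enum_uniq -?cardE //; by move/eqP.
Qed.

Lemma nth_enum_surj (T : finType) (A : {set T}) v (u : T) :
  u \in A -> exists2 i, i < #|A| & u = nth v (enum A) i.
Proof.
move=> hu; exists (index u (enum A)); first by rewrite cardE index_mem mem_enum.
by rewrite nth_index // mem_enum.
Qed.

Lemma pm_of (T : finType) (e : rel T) (A : {set T}) (v : T) :
  #|A| = #|~: A| -> (forall u w, e u w = ((u \in A) != (w \in A))) ->
  has_perfect_matching e.
Proof.
move=> hc he.
pose g1 (i : 'I_#|A|) := nth v (enum A) i.
pose g2 (i : 'I_#|A|) := nth v (enum (~: A)) i.
have g1A i : g1 i \in A by apply: nth_enum_in.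
have g2B i : g2 i \notin A.
  have : g2 i \in ~: A by apply: nth_enum_in; rewrite -hc.
  by rewrite inE.
have g1i : injective g1.
  by move=> i j /nth_enum_inj h; apply: val_inj; apply: h.
have g2i : injective g2.
  by move=> i j /nth_enum_inj h; apply: val_inj; apply: h; rewrite -hc.
exists [set [set g1 i; g2 i] | i : 'I_#|A|]; split.
  move=> S /imsetP [i _ ->]; exists (g1 i), (g2 i); split=> //.
  by rewrite he g1A (negbTE (g2B i)).
move=> u.
suff [i Hi] : exists i, [set S in [set [set g1 i; g2 i] | i : 'I_#|A|] | u \in S]
   = [set [set g1 i; g2 i]] by rewrite Hi cards1.
case: (boolP (u \in A)) => hu.
  have [i hi ->] := nth_enum_surj _ _ v _ hu.
  exists (Ordinal hi); apply/setP => S; rewrite !inE; apply/andP/eqP.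
    case=> /imsetP [j _ ->]; rewrite !inE => /orP [/eqP h|/eqP h].
      by have -> := g1i (Ordinal hi) j h.
    by have := g2B j; rewrite -h (@nth_enum_in _ _ v _ hi).
  move=> ->; split; first by apply: imset_f.
  by rewrite !inE eqxx.
have hu' : u \in ~: A by rewrite inE.
have [i hi ->] := nth_enum_surj _ _ v _ hu'.
rewrite -hc in hi.
exists (Ordinal hi); apply/setP => S; rewrite !inE; apply/andP/eqP.
  case=> /imsetP [j _ ->]; rewrite !inE => /orP [/eqP h|/eqP h].
    by have := g2B (Ordinal hi); rewrite /g2 /= h g1A.
  by have -> := g2i (Ordinal hi) j h.
move=> ->; split; first by apply: imset_f.
by rewrite !inE eqxx orbT.
Qed.

Lemma bip_case (T : finType) (e : rel T) (A : {set T}) :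
  simple_graph e -> 3 <= #|T| -> (forall x : T, (#|T|).-1 <= 2 * deg e x) ->
  ~ has_perfect_matching e ->
  (forall u v, e u v -> (u \in A) != (v \in A)) ->
  odd #|T| /\ graph_iso e (@Kbip_rel (half #|T|) (half #|T|.+1)).
Proof.
move=> [irr sym] h3 hdeg hpm.
set n := #|T| in h3 hdeg *.
wlog hab : A / #|A| <= #|~: A|.
  move=> H hsep; case: (leqP #|A| #|~: A|) => h; first exact: H h hsep.
  apply: (H (~: A)); first by rewrite setCK ltnW.
  by move=> u v /hsep; rewrite !inE; case: (u \in A); case: (v \in A).
move=> hsep.
have hn : #|A| + #|~: A| = n := cardsC A.
have hvA v : v \notin A -> [set y | e v y] = A.
  move=> hv; apply/eqP; rewrite eqEcard; apply/andP; split.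
    apply/subsetP => y; rewrite inE => /hsep.
    by rewrite (negbTE hv); case: (y \in A).
  have := hdeg v; rewrite /deg => hd; slia.
have he u w : e u w = ((u \in A) != (w \in A)).
  case hu: (u \in A); case hw: (w \in A) => /=.
  - by apply/negbTE/negP => /hsep; rewrite hu hw.
  - by rewrite sym; have /setP/(_ u) := hvA w (negbT hw); rewrite inE hu.
  - by have /setP/(_ w) := hvA u (negbT hu); rewrite inE hw.
  - by apply/negbTE/negP => /hsep; rewrite hu hw.
have [v hv] : exists v, v \notin A.
  have : 0 < #|~: A| by slia.
  by case/card_gt0P => v; rewrite inE => hv; exists v.
have hlo : n.-1 <= 2 * #|A| by have := hdeg v; rewrite /deg hvA.
case: (ltnP (2 * #|A|) n) => hcase; last first.
  by exfalso; apply: hpm; apply: (@pm_of _ _ A v) => //; slia.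
have hT : n = (#|A|).*2.+1 by rewrite -mul2n; slia.
have hb : #|~: A| = (#|A|).+1 by slia.
split; first by rewrite hT /= odd_double.
have h1 : half n = #|A| by rewrite hT -[_.+1]/(true + _) half_bit_double.
have h2 : half n.+1 = #|A|.+1 by rewrite hT -doubleS half_double.
rewrite h1 h2.
pose g (s : 'I_#|A| + 'I_(#|A|.+1)) := match s with
  | inl i => nth v (enum A) i | inr j => nth v (enum (~: A)) j end.
have gA i : g (inl i) \in A by apply: nth_enum_in.
have gB j : g (inr j) \notin A.
  have : g (inr j) \in ~: A by apply: nth_enum_in; rewrite hb.
  by rewrite inE.
apply: (@iso_inv _ _ e _ g).
- case=> i [] j /= h.
  + by congr inl; apply: val_inj; exact: (@nth_enum_inj _ A v _ _ (ltn_ord i) (ltn_ord j) h).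
  + by have := gB j; rewrite /= -h (gA i).
  + by have := gB i; rewrite /= h (gA j).
  + congr inr; apply: val_inj; apply: (@nth_enum_inj _ (~: A) v _ _ _ _ h); by rewrite hb.
- by rewrite card_sum !card_ord; change (n <= #|A| + #|A|.+1); slia.
- case=> i [] j; rewrite he ?gA ?(negbTE (gB _)) //.
Qed.

Theorem theorem5 (T : finType) (e : rel T) :
  simple_graph e ->
  3 <= #|T| ->
  (forall x : T, (#|T|).-1 <= 2 * deg e x) ->
  ~ has_perfect_matching e ->
  triangle_free e ->
  graph_iso e C5_rel \/
  (odd #|T| /\ graph_iso e (@Kbip_rel (half #|T|) (half #|T|.+1))).
Proof.
move=> hs h3 hdeg hpm htf.
have [irr sym] := hs.
have tri u w t : e u w -> e w t -> e t u -> False.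
  by move=> h1 h2 h4; apply: (htf u w t).
have [x _] : exists x : T, x \in T.
  have : 0 < #|T| by slia.
  by case/card_gt0P => x hx; exists x.
have [y hxy] : exists y, e x y.
  have := hdeg x; rewrite /deg => hd.
  have : 0 < #|[set y | e x y]| by slia.
  by case/card_gt0P => y; rewrite inE => h; exists y.
case: (boolP [forall t, e x t || e y t]) => hcov.
  right; apply: (@bip_case T e [set t | e y t]) => //.
  move=> u w huw; rewrite !inE.
  have := forallP hcov u; have := forallP hcov w.
  case eyu: (e y u); case eyw: (e y w) => //=.
    by exfalso; apply: (tri y u w) => //; rewrite sym.
  move/orP => [exw|//]; move/orP => [exu|//].
  by exfalso; apply: (tri x u w) => //; rewrite sym.
left.
have [z hz] : exists z, ~~ (e x z || e y z) by apply/forallPn.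
rewrite negb_or in hz; case/andP: hz => nxz nyz.
set n := #|T| in h3 hdeg.
set Nx := [set t | e x t]. set Ny := [set t | e y t]. set Nz := [set t | e z t].
have dx : n.-1 <= 2 * #|Nx| by exact: hdeg x.
have dy : n.-1 <= 2 * #|Ny| by exact: hdeg y.
have dz : n.-1 <= 2 * #|Nz| by exact: hdeg z.
have dis : Nx :&: Ny = set0.
  apply/setP => t; rewrite !inE; apply/negbTE/andP => [[h1 h2]].
  by apply: (tri x t y) => //; rewrite sym.
have cU : #|Nx :|: Ny| = #|Nx| + #|Ny| by rewrite cardsU dis cards0 subn0.
have sub : Nx :|: Ny \subset [set~ z].
  apply/subsetP => t; rewrite !inE; case/orP => h; apply/negP => /eqP htz; rewrite htz in h.
    by rewrite h in nxz.
  by rewrite h in nyz.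
have cs : #|Nx| + #|Ny| <= n.-1.
  by have := subset_leq_card sub; rewrite cardsC1 cU.
have ex : 2 * #|Nx| = n.-1 by slia.
have ey : 2 * #|Ny| = n.-1 by slia.
have cov t : t != z -> e x t || e y t.
  move=> htz; have : Nx :|: Ny = [set~ z].
    apply/eqP; rewrite eqEcard sub /=.
    have -> : #|[set~ z]| = n.-1 by rewrite cardsC1.
    rewrite cU; slia.
  by move/setP/(_ t); rewrite !inE htz.
have xNy : x \in Ny by rewrite inE sym.
have yNx : y \in Nx by rewrite inE.
have [a /andP [za xa]] : exists a, e z a && e x a.
  case: (boolP [exists a, e z a && e x a]) => [/existsP //|/existsPn ha].
  exfalso.
  have sz : Nz \subset Ny :\ x.
    apply/subsetP => t; rewrite !inE => zt.
    have tz : t != z by apply/eqP => tz; rewrite tz irr in zt.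
    have := cov t tz; have := ha t; rewrite zt /= => /negbTE -> /= eyt.
    rewrite eyt andbT; apply/eqP => tx; rewrite tx sym in zt.
    by rewrite zt in nxz.
  have c1 := subset_leq_card sz.
  have c2 := cardsD1 x Ny; rewrite xNy /= in c2.
  slia.
have [b /andP [zb yb]] : exists b, e z b && e y b.
  case: (boolP [exists b, e z b && e y b]) => [/existsP //|/existsPn ha].
  exfalso.
  have sz : Nz \subset Nx :\ y.
    apply/subsetP => t; rewrite !inE => zt.
    have tz : t != z by apply/eqP => tz; rewrite tz irr in zt.
    have := cov t tz; have := ha t; rewrite zt /= => /negbTE ->; rewrite orbF => ext.
    rewrite ext andbT; apply/eqP => ty; rewrite ty sym in zt.
    by rewrite zt in nyz.
  have c1 := subset_leq_card sz.
  have c2 := cardsD1 y Nx; rewrite yNx /= in c2.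
  slia.
have nxb : e x b = false.
  by apply/negbTE/negP => h; apply: (tri y x b) => //; rewrite sym.
have nya : e y a = false.
  by apply/negbTE/negP => h; apply: (tri x y a) => //; rewrite sym.
have nab : e a b = false.
  by apply/negbTE/negP => h; apply: (tri z a b) => //; rewrite sym.
have nxz' := negbTE nxz; have nyz' := negbTE nyz.
set Na := [set t | e a t]. set Nb := [set t | e b t].
have da : n.-1 <= 2 * #|Na| by exact: hdeg a.
have db : n.-1 <= 2 * #|Nb| by exact: hdeg b.
have sa : Na \subset z |: (Ny :\: Nz).
  apply/subsetP => t; rewrite !inE => at_.
  case: (eqVneq t z) => [//|tz] /=.
  have := cov t tz; case/orP => h.
    by exfalso; apply: (tri x a t) => //; rewrite sym.
  rewrite h andbT; apply/negP => zt.
  by apply: (tri z a t) => //; rewrite sym.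
have sb : Nb \subset z |: (Nx :\: Nz).
  apply/subsetP => t; rewrite !inE => bt.
  case: (eqVneq t z) => [//|tz] /=.
  have := cov t tz; case/orP => h; last first.
    by exfalso; apply: (tri y b t) => //; rewrite sym.
  rewrite h andbT; apply/negP => zt.
  by apply: (tri z b t) => //; rewrite sym.
have sz : Nz \subset (Nx :&: Nz) :|: (Ny :&: Nz).
  apply/subsetP => t; rewrite !inE => zt.
  have tz : t != z by apply/eqP => tz; rewrite tz irr in zt.
  by rewrite zt !andbT; apply: cov.
have ca := subset_leq_card sa. have cb := subset_leq_card sb.
have cz := subset_leq_card sz.
rewrite cardsU1 cardsD in ca; rewrite cardsU1 cardsD in cb.
rewrite cardsU in cz.
have l1 := leq_b1 (z \notin Ny :\: Nz). have l2 := leq_b1 (z \notin Nx :\: Nz).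
have i1 : #|Ny :&: Nz| <= #|Ny| by apply/subset_leq_card/subsetIl.
have i2 : #|Nx :&: Nz| <= #|Nx| by apply/subset_leq_card/subsetIl.
have ay : a != y by apply/eqP => ay; rewrite ay sym nyz' in za.
have c2 : #|[set y; a]| <= #|Nx|.
  apply: subset_leq_card; apply/subsetP => t; rewrite !inE.
  by case/orP => /eqP ->; rewrite // sym.
rewrite cards2 eq_sym ay /= in c2.
have n5 : n = 5 by slia.
pose g (i : 'I_5) := match val i with
  | 0 => x | 1 => y | 2 => b | 3 => z | _ => a end.
have hE i j : e (g i) (g j) = C5_rel i j.
  case: i j => [[|[|[|[|[|i]]]]] Hi] [[|[|[|[|[|j]]]]] Hj] //=; vm_compute;
  rewrite ?irr ?hxy ?yb ?zb ?za ?xa ?nxb ?nya ?nab ?nxz' ?nyz' //;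
  rewrite sym ?irr ?hxy ?yb ?zb ?za ?xa ?nxb ?nya ?nab ?nxz' ?nyz' //.
apply: (@iso_inv _ _ e C5_rel g) => //.
  by move=> i j hij; apply: C5_inj => k; rewrite -!hE hij.
by rewrite card_ord; change (n <= 5); rewrite n5.
Qed.
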